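(* For $n\ge1$, $\left|\Pi_n\wr C_2(1^11^2,1^21^1)\right|=\sum_{k=0}^n 2^k \begin{Bmatrix} n\\ k\end{Bmatrix}$, where $\begin{Bmatrix} n\\ k\end{Bmatrix}$ is a Stirling number of the second kind.
   Context: For $n\ge0$ let $[n]=\{1,\dots,n\}$. A $2$-colored set partition of $[n]$ is a set partition of $[n]$ together with an assignment of a color from $\{1,2\}$ to each element; $\Pi_n\wr C_2$ is the set of these. For a set $S$ of patterns, $\Pi_n\wr C_2(S)$ is the set of such colored partitions avoiding every pattern in $S$ in the pattern sense. For the patterns used here: $\sigma$ contains $1^11^2$ iff there are $i<j$ in the same block with $i$ colored $1$ and $j$ colored $2$; $\sigma$ contains $1^21^1$ iff there are $i<j$ in the same block with $i$ colored $2$ and $j$ colored $1$. *)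

(* Defs.v *)
From mathcomp Require Import all_boot.
Set Implicit Arguments. Unset Strict Implicit. Unset Printing Implicit Defensive.

(* The ground set [n] = {1,...,n} is modelled by 'I_n = {0,...,n-1}
   (shift by one; the order is preserved). *)

Definition color1 : 'I_2 := ord0.
Definition color2 : 'I_2 := ord_max.

Definition colored_partition (n : nat) :=
  ({set {set 'I_n}} * {ffun 'I_n -> 'I_2})%type.

Definition is_colored_partition n (s : colored_partition n) : bool :=
  partition s.1 [set: 'I_n].

Definition same_block n (P : {set {set 'I_n}}) (i j : 'I_n) : bool :=
  [exists B in P, (i \in B) && (j \in B)].

Definition contains_11_12 n (s : colored_partition n) : bool :=
  [exists i : 'I_n, exists j : 'I_n,
     [&& i < j, same_block s.1 i j, s.2 i == color1 & s.2 j == color2]].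

Definition contains_12_11 n (s : colored_partition n) : bool :=
  [exists i : 'I_n, exists j : 'I_n,
     [&& i < j, same_block s.1 i j, s.2 i == color2 & s.2 j == color1]].

Definition avoiders (n : nat) : {set colored_partition n} :=
  [set s : colored_partition n | [&& is_colored_partition s,
                                    ~~ contains_11_12 s & ~~ contains_12_11 s]].

Fixpoint stirling2 (n k : nat) : nat :=
  match n, k with
  | 0, 0 => 1
  | 0, _.+1 => 0
  | _.+1, 0 => 0
  | n'.+1, k'.+1 => k'.+1 * stirling2 n' k'.+1 + stirling2 n' k'
  end.

(* Main.v *)
Require Import Defs.
From mathcomp Require Import all_boot zify.
Set Implicit Arguments. Unset Strict Implicit. Unset Printing Implicit Defensive.

Definition dat n := ({ffun 'I_n -> 'I_n} * {ffun 'I_n -> 'I_2})%type.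

Definition valid n (t : dat n) : bool :=
  [forall i, [&& t.1 i <= i, t.1 (t.1 i) == t.1 i & t.2 i == t.2 (t.1 i)]].

Definition fixc n (r : {ffun 'I_n -> 'I_n}) := #|[set i | r i == i]|.

Definition Tk n k := [set t : dat n | valid t && (fixc t.1 == k)].

Notation L i := (lift ord_max i).

Definition res n (t : dat n.+1) : dat n :=
  ([ffun i => insubd i (val (t.1 (L i)))], [ffun i => t.2 (L i)]).

Definition ext n (t : dat n) (x : 'I_2 + 'I_n) : dat n.+1 :=
  ([ffun i : 'I_n.+1 => if unlift ord_max i is Some j then L (t.1 j)
     else match x with inl _ => ord_max | inr j => L j end],
   [ffun i : 'I_n.+1 => if unlift ord_max i is Some j then t.2 j
     else match x with inl col => col | inr j => t.2 j end]).

Lemma validP n (t : dat n) : reflect (forall i, [/\ t.1 i <= i, t.1 (t.1 i) = t.1 i & t.2 i = t.2 (t.1 i)]) (valid t).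
Proof.
apply: (iffP forallP) => H i.
  by case/and3P: (H i) => a /eqP b /eqP c.
by case: (H i) => a b c; rewrite a b c !eqxx.
Qed.

Lemma valL n (i : 'I_n) : val (L i) = val i.
Proof. exact: lift_max. Qed.

Lemma L_res n (t : dat n.+1) i : valid t -> L ((res t).1 i) = t.1 (L i).
Proof.
move/validP=> V; apply: val_inj; rewrite valL /= ffunE val_insubd.
case: (V (L i)) => le _ _; move: le; rewrite valL => le.
by rewrite (leq_ltn_trans le (ltn_ord i)).
Qed.

Lemma res_valid n (t : dat n.+1) : valid t -> valid (res t).
Proof.
move=> Vt; have := Vt => /validP V; apply/validP => i.
have Li := L_res i Vt.
split.
- have e : val ((res t).1 i) = val (t.1 (L i)) by rewrite -Li valL.
  by rewrite e -(valL i); case: (V (L i)).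
- apply: (@lift_inj _ ord_max).
  have E : forall j, lift ord_max ((res t).1 j) = t.1 (L j) := fun j => L_res j Vt.
  by rewrite !E; case: (V (L i)).
- have C : forall j, (res t).2 j = t.2 (L j) by move=> j; rewrite ffunE.
  by rewrite !C Li; case: (V (L i)).
Qed.

Lemma widenL n (j : 'I_n) : widen_ord (leqnSn n) j = L j.
Proof. by apply: val_inj; rewrite valL. Qed.

Lemma card_split n (P : pred 'I_n.+1) :
  #|[set i | P i]| = #|[set j : 'I_n | P (L j)]| + P ord_max.
Proof.
rewrite -!sum1dep_card big_mkcond big_ord_recr /=.
rewrite [in RHS]big_mkcond.
congr (_ + _).
by apply: eq_bigr => j _; rewrite widenL.
Qed.

Lemma fixc_res n (t : dat n.+1) : valid t ->
  fixc t.1 = fixc (res t).1 + (t.1 ord_max == ord_max).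
Proof.
move=> Vt; rewrite /fixc card_split; congr (_ + _).
apply: eq_card => j; rewrite !inE -[((res t).1 j == j)](inj_eq (@lift_inj _ ord_max)).
by rewrite (L_res _ Vt).
Qed.

Lemma ext1L n (t : dat n) x j : (ext t x).1 (L j) = L (t.1 j).
Proof. by rewrite ffunE liftK. Qed.
Lemma ext2L n (t : dat n) x j : (ext t x).2 (L j) = t.2 j.
Proof. by rewrite ffunE liftK. Qed.
Lemma ext1M n (t : dat n) x : (ext t x).1 ord_max = match x with inl _ => ord_max | inr j => L j end.
Proof. by rewrite ffunE unlift_none. Qed.
Lemma ext2M n (t : dat n) x : (ext t x).2 ord_max = match x with inl col => col | inr j => t.2 j end.
Proof. by rewrite ffunE unlift_none. Qed.

Definition goodx n (t : dat n) (x : 'I_2 + 'I_n) : bool :=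
  if x is inr j then t.1 j == j else true.

Lemma ext_valid n (t : dat n) x : valid t -> goodx t x -> valid (ext t x).
Proof.
move=> /validP V g; apply/validP => i.
case: (unliftP ord_max i) => [j ->|->].
  rewrite !ext1L !ext2L; case: (V j) => a b c.
  by rewrite !valL b c.
rewrite !ext1M ext2M; case: x g => [col|j] g.
  by rewrite ?ext1M ?ext2M.
rewrite ext1L ?ext2M ?ext2L (eqP g); split=> //.
by rewrite valL /= ltnW.
Qed.

Lemma res1E n (u : dat n.+1) i : (res u).1 i = insubd i (val (u.1 (L i))).
Proof. by rewrite ffunE. Qed.
Lemma res2E n (u : dat n.+1) i : (res u).2 i = u.2 (L i).
Proof. by rewrite ffunE. Qed.

Lemma res_ext n (t : dat n) x : res (ext t x) = t.
Proof.
case: t => r c; apply/eqP; rewrite xpair_eqE; apply/andP; split; apply/eqP; apply/ffunP => i.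
  by rewrite res1E ext1L; apply: val_inj; rewrite val_insubd valL ltn_ord.
by rewrite res2E ext2L.
Qed.

Lemma ext_inj n (t : dat n) : injective (ext t).
Proof.
move=> x y E.
have E1 : (ext t x).1 ord_max = (ext t y).1 ord_max by rewrite E.
have E2 : (ext t x).2 ord_max = (ext t y).2 ord_max by rewrite E.
rewrite !ext1M in E1; rewrite !ext2M in E2.
clear E; case: x y E1 E2 => [a|i] [b|j] //= E1 E2.
- by rewrite E2.
- by move: (neq_lift ord_max j); rewrite -E1 eqxx.
- by move: (neq_lift ord_max i); rewrite E1 eqxx.
- by rewrite (lift_inj E1).
Qed.

Definition back n (t : dat n.+1) : 'I_2 + 'I_n :=
  match unlift ord_max (t.1 ord_max) with Some j => inr j | None => inl (t.2 ord_max) end.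

Lemma datE m (t1 t2 : dat m) : (forall i, t1.1 i = t2.1 i) -> (forall i, t1.2 i = t2.2 i) -> t1 = t2.
Proof.
case: t1 t2 => a b [c d] /= H1 H2.
have -> : a = c by apply/ffunP.
have -> : b = d by apply/ffunP.
by [].
Qed.

Lemma ext_back n (t : dat n.+1) : valid t -> ext (res t) (back t) = t /\ goodx (res t) (back t).
Proof.
move=> Vt; have := Vt => /validP V.
have K : forall j, L ((res t).1 j) = t.1 (L j) := fun j => L_res j Vt.
rewrite /back; case: (unliftP ord_max (t.1 ord_max)) => [j Ej|Ej].
  split; last first.
    apply/eqP; apply: (@lift_inj _ ord_max); rewrite K -Ej.
    by case: (V ord_max).
  apply: datE => i.
    case: (unliftP ord_max i) => [k ->|->].
      by rewrite ext1L K.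
    by rewrite ext1M.
  case: (unliftP ord_max i) => [k ->|->].
    by rewrite ext2L res2E.
  by rewrite ext2M res2E -Ej; case: (V ord_max).
split=> //.
apply: datE => i.
  case: (unliftP ord_max i) => [k ->|->].
    by rewrite ext1L K.
  by rewrite ext1M.
case: (unliftP ord_max i) => [k ->|->].
  by rewrite ext2L res2E.
by rewrite ext2M.
Qed.

Definition isl n (x : 'I_2 + 'I_n) : nat := if x is inl _ then 1 else 0.

Lemma fixc_ext n (t : dat n) x : valid t -> goodx t x ->
  fixc (ext t x).1 = fixc t.1 + isl x.
Proof.
move=> Vt g; rewrite (fixc_res (ext_valid Vt g)) res_ext ext1M; congr (_ + _).
case: x {g} => [a|j] //=; first by rewrite eqxx.
by rewrite eq_sym (negbTE (neq_lift _ _)).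
Qed.

Lemma fiber n k (t' : dat n) : valid t' ->
  #|[set t in Tk n.+1 k | res t == t']| =
    (fixc t'.1 + 1 == k) * 2 + (fixc t'.1 == k) * fixc t'.1.
Proof.
move=> Vt.
have -> : [set t in Tk n.+1 k | res t == t'] =
   ext t' @: [set x | goodx t' x && (fixc t'.1 + isl x == k)].
  apply/setP => t; rewrite !inE; apply/idP/imsetP.
    case/andP => /andP[Vtt Ft] /eqP Rt.
    have [E G] := ext_back Vtt; rewrite Rt in E G.
    exists (back t) => //; rewrite inE G /= -(fixc_ext Vt G) E.
    done.
  case=> x; rewrite inE => /andP[G F] ->.
  by rewrite ext_valid //= fixc_ext // F res_ext eqxx.
rewrite card_imset; last exact: ext_inj.
rewrite -sum1dep_card big_sumType /= !sum1dep_card.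
congr (_ + _).
  case: (fixc t'.1 + 1 == k); rewrite ?muln1 ?mul1n.
    by rewrite (eq_card (B := predT)) ?card_ord // => a; rewrite inE.
  by apply: eq_card0 => a; rewrite inE.
rewrite addn0; case: (fixc t'.1 == k); rewrite ?mul1n ?mul0n.
  by apply: eq_card => j; rewrite !inE andbT.
by apply: eq_card0 => j; rewrite inE andbF.
Qed.

Lemma sum_bool (T : finType) (P : pred T) (b : pred T) :
  \sum_(i | P i) (b i : nat) = #|[set i | P i && b i]|.
Proof.
rewrite -sum1dep_card big_mkcondr; apply: eq_bigr => i _.
by case: (b i).
Qed.

Lemma Tk_rec n k : #|Tk n.+1 k| = (if k is k'.+1 then 2 * #|Tk n k'| else 0) + k * #|Tk n k|.
Proof.
rewrite -sum1_card (partition_big (@res n) (@valid n)); last first.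
  by move=> t; rewrite inE => /andP[V _]; apply: res_valid.
rewrite /=.
transitivity (\sum_(t' : dat n | valid t') ((fixc t'.1 + 1 == k) * 2 + (fixc t'.1 == k) * k)).
  apply: eq_bigr => t' Vt'; rewrite sum1dep_card.
  have -> : [set x | (x \in Tk n.+1 k) && (res x == t')] = [set t in Tk n.+1 k | res t == t'].
    by apply/setP => x; rewrite !inE.
  rewrite fiber //; congr (_ + _); by case: eqP => [->|].
rewrite big_split /= -!big_distrl /= !sum_bool mulnC [k * _]mulnC; congr (_ + _).
  case: k => [|k].
    by rewrite eq_card0 // => t; rewrite inE addn1 andbF.
  f_equal; apply: eq_card => t; rewrite !inE addn1 eqSS.
f_equal; apply: eq_card => t; rewrite !inE.
Qed.

Lemma Tk0 k : #|Tk 0 k| = (k == 0).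
Proof.
have V : forall t : dat 0, valid t by move=> t; apply/forallP => -[].
have F : forall t : dat 0, fixc t.1 = 0.
  by move=> t; apply: eq_card0 => -[].
case: k => [|k].
  rewrite (eq_card (B := predT)); last by move=> t; rewrite !inE V F.
  by rewrite cardT -cardE card_prod !card_ffun !card_ord.
by apply: eq_card0 => t; rewrite !inE F andbF.
Qed.

Lemma TkE n k : #|Tk n k| = 2 ^ k * stirling2 n k.
Proof.
elim: n k => [|n IH] k.
  by case: k => [|k]; rewrite Tk0 /= ?muln0 ?expn0.
rewrite Tk_rec; case: k => [|k]; first by rewrite muln0.
rewrite /= !IH expnS; set a := 2 ^ k; set b := stirling2 n k; set c := stirling2 n k.+1; nia.
Qed.

Lemma sum_eqk (f N : nat) : \sum_(0 <= k < N) (f == k : nat) = (f < N).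
Proof.
elim: N => [|N IH]; first by rewrite big_geq.
rewrite big_nat_recr //= IH ltnS; case: (ltngtP f N) => [h|h|h] //=.
Qed.

Lemma card_valid n : #|[set t : dat n | valid t]| = \sum_(0 <= k < n.+1) 2 ^ k * stirling2 n k.
Proof.
under eq_bigr => k _ do rewrite -TkE.
transitivity (\sum_(0 <= k < n.+1) \sum_(t : dat n | valid t) (fixc t.1 == k : nat)).
  rewrite exchange_big /= -sum1dep_card; apply: eq_bigr => t _.
  rewrite sum_eqk ltnS.
  by rewrite /fixc (leq_trans (max_card _)) // card_ord.
apply: eq_bigr => k _; rewrite sum_bool; apply: eq_card => t; by rewrite !inE.
Qed.

Lemma color_cases (x y : 'I_2) : x != y ->
  ((x == color1) && (y == color2)) || ((x == color2) && (y == color1)).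
Proof. by case: x => [[|[|?]] //] ?; case: y => [[|[|?]] //] ?. Qed.

Lemma same_block_sym n (P : {set {set 'I_n}}) i j : same_block P i j = same_block P j i.
Proof.
by apply/existsP/existsP => -[B /andP[PB /andP[a b]]]; exists B; rewrite PB a b.
Qed.

Lemma avoid_mono n (s : colored_partition n) : s \in avoiders n ->
  forall i j, same_block s.1 i j -> s.2 i = s.2 j.
Proof.
rewrite inE => /and3P[_ N1 N2].
have key : forall i j : 'I_n, i < j -> same_block s.1 i j -> s.2 i = s.2 j.
  move=> i j lt sb; apply/eqP; apply/negP => /negP ne.
  case/orP: (color_cases ne) => /andP[a b].
    by move/negP: N1; apply; apply/existsP; exists i; apply/existsP; exists j; rewrite lt sb a b.
  by move/negP: N2; apply; apply/existsP; exists i; apply/existsP; exists j; rewrite lt sb a b.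
move=> i j sb; case: (ltngtP i j) => h.
- exact: key.
- by rewrite same_block_sym in sb; rewrite (key _ _ h sb).
- by rewrite (val_inj h).
Qed.

Definition psi n (t : dat n) : colored_partition n := (preim_partition t.1 [set: 'I_n], t.2).

Lemma eqiR n (r : {ffun 'I_n -> 'I_n}) :
  {in [set: 'I_n] & &, equivalence_rel (fun x y => r x == r y)}.
Proof. by split=> // /eqP->. Qed.

Lemma psi_block n (r : {ffun 'I_n -> 'I_n}) i j :
  same_block (preim_partition r [set: 'I_n]) i j = (r i == r j).
Proof.
have partP := preim_partitionP r [set: 'I_n].
have [_ tI _] := and3P partP.
rewrite -(pblock_equivalence_partition (eqiR r)) ?inE //.
apply/existsP/idP.
  case=> B /andP[PB /andP[a b]]; by rewrite (def_pblock tI PB a).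
move=> h; exists (pblock (preim_partition r [set: 'I_n]) i).
have cP : cover (preim_partition r [set: 'I_n]) = [set: 'I_n] := cover_partition partP.
rewrite pblock_mem ?cP ?inE // h mem_pblock cP inE.
done.
Qed.

Lemma psi_avoid n (t : dat n) : valid t -> psi t \in avoiders n.
Proof.
move=> /validP V; rewrite inE /is_colored_partition preim_partitionP /=.
apply/andP; split; apply/negP => /existsP[i /existsP[j /and4P[_ sb a b]]];
  move: sb; rewrite psi_block => /eqP e.
- have : t.2 i = t.2 j.
    by case: (V i) => _ _ ->; case: (V j) => _ _ ->; rewrite e.
  by move=> E; move: a b; rewrite /= E => /eqP ->.
- have : t.2 i = t.2 j.
    by case: (V i) => _ _ ->; case: (V j) => _ _ ->; rewrite e.
  by move=> E; move: a b; rewrite /= E => /eqP ->.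
Qed.

Lemma psi_inj n : {in [set t : dat n | valid t] &, injective (@psi n)}.
Proof.
move=> t u; rewrite !inE => /validP Vt /validP Vu [E1 E2].
have S : forall i j, (t.1 i == t.1 j) = (u.1 i == u.1 j).
  by move=> i j; rewrite -!psi_block E1.
apply: datE => i; last by rewrite E2.
apply: val_inj; apply/eqP; rewrite eqn_leq.
have h1 : u.1 i = u.1 (t.1 i).
  by apply/eqP; rewrite -S; case: (Vt i) => _ -> _.
have h2 : t.1 i = t.1 (u.1 i).
  by apply/eqP; rewrite S; case: (Vu i) => _ -> _.
apply/andP; split.
  by rewrite h2; case: (Vt (u.1 i)).
by rewrite h1; case: (Vu (t.1 i)).
Qed.

Definition amin n (B : {set 'I_n}) (i0 : 'I_n) := [arg min_(j < i0 in B) val j].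

Lemma amin_spec n (B : {set 'I_n}) i0 : i0 \in B ->
  amin B i0 \in B /\ forall j, j \in B -> amin B i0 <= j.
Proof. move=> h; rewrite /amin; by case: arg_minnP. Qed.

Lemma amin_eq n (B : {set 'I_n}) i0 i1 : i0 \in B -> i1 \in B -> amin B i0 = amin B i1.
Proof.
move=> h0 h1; have [a0 m0] := amin_spec h0; have [a1 m1] := amin_spec h1.
by apply: val_inj; apply/eqP; rewrite eqn_leq m0 ?m1.
Qed.

Lemma psi_surj n (s : colored_partition n) : s \in avoiders n ->
  exists2 t, valid t & psi t = s.
Proof.
move=> sA; have M := avoid_mono sA; move: sA.
case: s M => P c /= M; rewrite inE /is_colored_partition /= => /and3P[partP _ _].
have cP := cover_partition partP; have [_ tI _] := and3P partP.
have ip : forall i, i \in pblock P i by move=> i; rewrite mem_pblock cP inE.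
pose r := [ffun i => amin (pblock P i) i].
have rE : forall i, r i = amin (pblock P i) i by move=> i; rewrite ffunE.
have rin : forall i, r i \in pblock P i by move=> i; rewrite rE; case: (amin_spec (ip i)).
have pr : forall i, pblock P (r i) = pblock P i by move=> i; apply: same_pblock.
have key : forall x y, (r x == r y) = (pblock P x == pblock P y).
  move=> x y; apply/eqP/eqP => h.
    by rewrite -pr h pr.
  rewrite !rE h; apply: amin_eq => //; by rewrite -h.
exists (r, c).
  apply/validP => i /=; split.
  - by rewrite rE; case: (amin_spec (ip i)) => _ ->.
  - by apply/eqP; rewrite key pr.
  - apply: M; apply/existsP; exists (pblock P i); rewrite pblock_mem ?cP ?inE //= ip rin.
    done.
rewrite /psi /=; congr (_, _).
rewrite -[in RHS](preim_partition_pblock partP) /preim_partition /equivalence_partition.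
apply: eq_imset => x; apply/setP => y; by rewrite !inE key.
Qed.

Theorem mainTheorem9 (n : nat) : 1 <= n ->
  #|avoiders n| = \sum_(0 <= k < n.+1) 2 ^ k * stirling2 n k.
Proof.
move=> _; rewrite -card_valid -(card_in_imset (@psi_inj n)).
have -> // : avoiders n = @psi n @: [set t : dat n | valid t].
apply/setP => s; apply/idP/imsetP.
  by case/psi_surj => t Vt <-; exists t; rewrite ?inE.
by case=> t; rewrite inE => Vt ->; apply: psi_avoid.
Qed.
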